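(* Let $q\ge2$ be a prime power, $d\ge6$ and $2\le j\le d$. Then $|Q_j(d-3)|>|Q_j(d-2)|$.
   Context: Let $b=-q$. For integers $m\ge0$ and $l$, ${m\brack l}_b=\prod_{t=1}^{l}\frac{b^{m-t+1}-1}{b^t-1}$ for $l\ge0$ and $0$ for $l<0$. For $0\le i,j\le d$, $$Q_j(i)=\sum_{h=0}^{\min\{j,d-i\}}(-1)^j(-q)^{\binom{j-h}{2}+hd}{d-h\brack d-j}_b{d-i\brack h}_b,$$ the eigenvalues of the Hermitian forms graph $Q_q(d,j)$. *)

(* Defs.v *)
From mathcomp Require Import all_boot all_order all_algebra.
Set Implicit Arguments. Unset Strict Implicit. Unset Printing Implicit Defensive.
Import Order.TTheory GRing.Theory Num.Theory.
Local Open Scope ring_scope.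

(* Gaussian binomial [m brack l]_b = prod_{t=1}^{l} (b^(m-t+1) - 1)/(b^t - 1),
   for l >= 0 (l is a nat here; negative l never occurs in Q_j(i)).
   The exponent m-t+1 is taken in int, so no truncation occurs. *)
Definition gbinom (b : rat) (m l : nat) : rat :=
  \prod_(1 <= t < l.+1) ((b ^ (m%:Z - t%:Z + 1) - 1) / (b ^+ t - 1)).

(* Q_j(i) for the Hermitian forms graph, with b = -q. *)
Definition Qeig (q d j i : nat) : rat :=
  let b : rat := - (q%:R) in
  \sum_(0 <= h < (minn j (d - i)).+1)
     ((-1) ^+ j * b ^+ ('C(j - h, 2) + h * d)%N
        * gbinom b (d - h) (d - j) * gbinom b (d - i) h).

Definition prime_power (q : nat) : Prop :=
  exists p k : nat, prime p /\ (0 < k)%N /\ q = (p ^ k)%N.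

(* Main.v *)
Require Import Defs.
From mathcomp Require Import all_boot all_order all_algebra.
From mathcomp Require Import zify ring lra.
Import Order.TTheory GRing.Theory Num.Theory.
Local Open Scope ring_scope.

Lemma gbinomE (b : rat) m l : (l <= m.+1)%N ->
  gbinom b m l = \prod_(1 <= t < l.+1) ((b ^+ (m.+1 - t) - 1) / (b ^+ t - 1)).
Proof.
move=> hl; rewrite /gbinom; apply: eq_big_nat => t /andP[h1 h2].
have -> : (m%:Z - t%:Z + 1 = (m.+1 - t)%N :> int) by lia.
by [].
Qed.

Lemma num_step (b : rat) m l : (l <= m.+1)%N ->
  \prod_(1 <= t < l.+1) (b ^+ (m.+1 - t) - 1) * (b ^+ m.+1 - 1) =
  \prod_(1 <= t < l.+1) (b ^+ (m.+2 - t) - 1) * (b ^+ (m.+1 - l) - 1).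
Proof.
elim: l => [|l IH] hl.
  by rewrite !big_geq // subn0.
rewrite !(big_nat_recr l.+1) //=.
have -> : (m.+2 - l.+1 = m.+1 - l)%N by lia.
have e : \prod_(1 <= i < l.+1) (b ^+ (m.+1 - i) - 1) * (b ^+ m.+1 - 1) =
  \prod_(1 <= i < l.+1) (b ^+ (m.+2 - i) - 1) * (b ^+ (m.+1 - l) - 1) by apply: IH; lia.
rewrite mulrAC e; ring.
Qed.

Lemma gbinom_step (b : rat) m l : (l <= m.+1)%N ->
  gbinom b m l * (b ^+ m.+1 - 1) = gbinom b m.+1 l * (b ^+ (m.+1 - l) - 1).
Proof.
move=> hl; rewrite gbinomE // gbinomE; last by lia.
rewrite !prodf_div mulrAC num_step //; ring.
Qed.

Lemma gbinom_neq0 (b : rat) m l : (forall k, (0 < k)%N -> b ^+ k != 1) -> (l <= m)%N ->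
  gbinom b m l != 0.
Proof.
move=> hb hl; rewrite gbinomE; last by lia.
rewrite prodf_seq_neq0; apply/allP => t; rewrite mem_index_iota => /andP[h1 h2].
apply/implyP => _; rewrite mulf_neq0 // ?invr_eq0 subr_eq0 hb //; lia.
Qed.
Lemma normbX (q : rat) n : 0 <= q -> `|(- q) ^+ n| = q ^+ n.
Proof. by move=> h; rewrite normrX normrN ger0_norm. Qed.

Lemma pow_ge (q : rat) m n : 2 <= q -> (m <= n)%N -> 2 ^+ m <= q ^+ n.
Proof.
move=> hq hmn; apply: (@le_trans _ _ (2 ^+ n)).
  by rewrite ler_eXn2l.
by apply: lerXn2r; rewrite ?nnegrE //; lra.
Qed.

Lemma bpow_neq1 (q : rat) k : 2 <= q -> (0 < k)%N -> (- q) ^+ k != 1.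
Proof.
move=> hq hk; apply/eqP => h.
have q0 : 0 <= q by lra.
have := @normbX q k q0; rewrite h normr1 => h1.
have := @pow_ge q 1 k hq hk; rewrite -h1 expr1; lra.
Qed.

Lemma inv_abs (q : rat) m n : 2 <= q -> (m <= n)%N -> `|((- q) ^+ n)^-1| <= (2 ^+ m)^-1.
Proof.
move=> hq hmn; rewrite normrV ?unitfE; last first.
  by rewrite expf_neq0 //; apply/eqP => hh; lra.
rewrite normbX; last lra.
rewrite lef_pV2 ?posrE ?exprn_gt0 //; try lra.
exact: pow_ge.
Qed.

Lemma inv_le4 (q : rat) n : 2 <= q -> (0 < n)%N -> ((- q) ^+ n)^-1 <= 1/4.
Proof.
move=> hq hn; rewrite exprNn -signr_odd.
have hp0 : 0 < q ^+ n by rewrite exprn_gt0 //; lra.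
case: (boolP (odd n)) => ho /=.
  rewrite expr1 mulN1r invrN.
  have : 0 <= (q ^+ n)^-1 by rewrite invr_ge0 ltW.
  lra.
rewrite expr0 mul1r.
have h2 : (2 <= n)%N by case: n hn ho {hp0} => [|[|n]].
have := @pow_ge q 2 n hq h2; rewrite expr2 => h.
have -> : (1/4 : rat) = 4^-1 by rewrite mul1r.
rewrite lef_pV2 ?posrE //; lra.
Qed.
Lemma gb2 (b : rat) : b - 1 != 0 -> b ^+ 2 - 1 != 0 ->
  [/\ gbinom b 2 0 = 1, gbinom b 2 1 = 1 + b & gbinom b 2 2 = 1].
Proof.
move=> h1 h2.
have e2 : b ^+ 2 - 1 = (b - 1) * (1 + b) by ring.
have h2' : 1 + b != 0 by apply: contraNneq h2 => h; rewrite e2 h mulr0.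
split; rewrite gbinomE // unlock /=; rewrite ?e2 ?expr1; field; rewrite ?h1 ?h2' //.
Qed.

Lemma gb3 (b : rat) : b - 1 != 0 -> b ^+ 2 - 1 != 0 -> b ^+ 3 - 1 != 0 ->
  [/\ gbinom b 3 1 = 1 + b + b ^+ 2, gbinom b 3 2 = 1 + b + b ^+ 2 & gbinom b 3 3 = 1].
Proof.
move=> h1 h2 h3.
have e2 : b ^+ 2 - 1 = (b - 1) * (1 + b) by ring.
have e3 : b ^+ 3 - 1 = (b - 1) * (1 + b + b ^+ 2) by ring.
have h2' : 1 + b != 0 by apply: contraNneq h2 => h; rewrite e2 h mulr0.
have h3' : 1 + b + b ^+ 2 != 0 by apply: contraNneq h3 => h; rewrite e3 h mulr0.
split; rewrite gbinomE // unlock /=; rewrite ?e2 ?e3 ?expr1; field; rewrite ?h1 ?h2' ?h3' //.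
Qed.

Lemma L1 (q u A : rat) : 2 <= q -> 0 <= u -> u * (q * q) = A -> A <= 11/8 -> (q - 1) * u <= 11/32.
Proof.
move=> hq hu hA h1.
have h : 0 <= (q - 2) * (q - 2) * u by apply: mulr_ge0 => //; nra.
nra.
Qed.

Lemma L2 (q v A : rat) : 2 <= q -> 0 <= v -> v * (q * q * q) = A -> A <= 11/8 * (65/48) -> v <= 1/4.
Proof.
move=> hq hv hA h1.
have h8 : 8 <= q * q * q.
  have h4 : 4 <= q * q by nra.
  nra.
have h : 0 <= (q * q * q - 8) * v by apply: mulr_ge0 => //; lra.
nra.
Qed.

Lemma L3 (q : rat) : 2 <= q -> (12/17) * (q * q * q) - q * q + q > 27/8.
Proof. move=> h; have p0 : 0 <= q - 2 by lra. nra. Qed.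

Lemma L4 (q : rat) : 2 <= q -> 2 <= q * q - q.
Proof. move=> h; nra. Qed.

Lemma key (q e f g be up om b E F W : rat) : 2 <= q ->
  `|e| <= 1/32 -> `|f| <= 1/64 -> `|g| <= 1/16 -> be <= 1/4 -> `|up| <= 1/4 ->
  (om = 1 \/ om <= 1/4) ->
  b = - q ->
  E = (1 - e) / (b ^+ 2 * (1 - be)) ->
  F = (1 - e) * (1 - f) / (b ^+ 3 * (1 - be) * (1 - up)) ->
  W = b ^+ 3 * (1 - om) / (1 - g) ->
  `|1 + (1 + b) * E + F| < `|F + (1 + b + b ^+ 2) * E + (1 + b + b ^+ 2) + W|.
Proof.
move=> hq he hf hg hbe hup hom hb hE hF hW.
have q0 : 0 < q by lra.
have [e1 e2] : -1/32 <= e /\ e <= 1/32 by move: he; rewrite ler_norml; case/andP; lra.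
have [f1 f2] : -1/64 <= f /\ f <= 1/64 by move: hf; rewrite ler_norml; case/andP; lra.
have [g1 g2] : -1/16 <= g /\ g <= 1/16 by move: hg; rewrite ler_norml; case/andP; lra.
have [u1 u2] : -1/4 <= up /\ up <= 1/4 by move: hup; rewrite ler_norml; case/andP; lra.
set A := (1 - e) / (1 - be).
have A0 : 0 <= A by apply: divr_ge0; lra.
have A1 : A <= 11/8 by rewrite ler_pdivrMr; lra.
set B := (1 - f) / (1 - up).
have B0 : 0 <= B by apply: divr_ge0; lra.
have B1 : B <= 65/48 by rewrite ler_pdivrMr; lra.
have b1n : 1 - be != 0 by apply/eqP => hh; lra.
have u1n : 1 - up != 0 by apply/eqP => hh; lra.
have qne : q != 0 by apply/eqP => hh; lra.
have qn : q ^+ 2 != 0 by rewrite expf_neq0.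
have qn3 : q ^+ 3 != 0 by rewrite expf_neq0.
have EE : E = A / q ^+ 2.
  by rewrite hE /A hb sqrrN; field; rewrite ?qne ?b1n ?u1n.
have FF : F = - (A * B) / q ^+ 3.
  rewrite hF /A /B hb exprNn /=; field.
  by rewrite ?qne ?b1n ?u1n.
set u := A / q ^+ 2.
have u0 : 0 <= u by apply: divr_ge0; rewrite ?exprn_ge0 // ltW.
have uq : u * q ^+ 2 = A by rewrite /u (mulfVK qn).
have w1 : (q - 1) * u <= 11/32 by apply: (@L1 q u A hq u0 _ A1); rewrite -expr2.
set v := A * B / q ^+ 3.
have AB0 : 0 <= A * B by apply: mulr_ge0.
have v0 : 0 <= v by apply: divr_ge0; rewrite ?exprn_ge0 // ltW.
have vq : v * q ^+ 3 = A * B by rewrite /v (mulfVK qn3).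
have AB1 : A * B <= 11/8 * (65/48) by apply: ler_pM.
have v1 : v <= 1/4.
  by apply: (@L2 q v (A * B) hq v0 _ AB1); rewrite -vq !exprS expr0 mulr1 !mulrA.
have r2E : 1 + (1 + b) * E + F = 1 - (q - 1) * u - v.
  by rewrite EE FF /u /v hb mulNr; ring.
have r3E : F + (1 + b + b ^+ 2) * E + (1 + b + b ^+ 2) + W =
   (1 - (q - 1) * u - v) + (q * q - q) + A + W.
  rewrite EE FF /u /v hb sqrrN mulNr -/u; rewrite -uq; ring.
rewrite r2E r3E.
have r2p : 0 < 1 - (q - 1) * u - v by lra.
rewrite (gtr0_norm r2p).
have L4q := @L4 q hq.
case: hom => [om1|om2].
  have -> : W = 0 by rewrite hW om1 subrr mulr0 mul0r.
  rewrite gtr0_norm; lra.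
set C := (1 - om) / (1 - g).
have C1 : 12/17 <= C by rewrite ler_pdivlMr; lra.
have b3 : (- q) ^+ 3 = - q ^+ 3 by ring.
have WE : W = - (q ^+ 3 * C) by rewrite hW /C hb b3; ring.
rewrite WE.
have q3 : q ^+ 3 = q * q * q by rewrite !exprS expr0 mulr1 mulrA.
have hc : q ^+ 3 * (12/17) <= q ^+ 3 * C by apply: ler_wpM2l; rewrite ?exprn_ge0 // ltW.
have hp := @L3 q hq.
rewrite q3 in hc; rewrite q3.
have qu0 : 0 <= (q - 1) * u by apply: mulr_ge0 => //; lra.
have r21 : 1 - (q - 1) * u - v <= 1 by lra.
move: r2p r21 hc hp A1 A0; set r := 1 - (q - 1) * u - v; set qq := q * q; set qqq := qq * q.
set M := qqq * C => r2p r21 hc hp A1 A0.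
clear -r2p r21 hc hp A1 A0.
rewrite ltr0_norm; lra.
Qed.

Lemma gstep (b : rat) m m' l : m' = m.+1 -> (l <= m')%N ->
  gbinom b m l * (b ^+ m' - 1) = gbinom b m' l * (b ^+ (m' - l) - 1).
Proof. by move=> -> h; apply: gbinom_step. Qed.

Lemma binS2 n : 'C(n.+1, 2) = ('C(n, 2) + n)%N.
Proof. by rewrite binS bin1. Qed.


Lemma main_part (q d j : nat) (b : rat) (t : nat -> rat) :
  (2 <= q)%N -> (6 <= d)%N -> (2 <= j)%N -> (j <= d)%N ->
  b = - (q%:R) ->
  (forall h, t h = b ^+ ('C(j - h, 2) + h * d) * gbinom b (d - h) (d - j)) ->
  Qeig q d j (d - 2) = (-1) ^+ j * (t 0%N + t 1%N * (1 + b) + t 2%N) /\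
  Qeig q d j (d - 3) = (-1) ^+ j * (t 0%N + t 1%N * (1 + b + b ^+ 2) + t 2%N * (1 + b + b ^+ 2) + t 3%N).
Proof.
move=> hq hd hj hjd hb ht.
have hQ : 2 <= (q%:R : rat) by rewrite ler_nat.
have bn1 : forall k, (0 < k)%N -> b ^+ k != 1 by move=> k hk; rewrite hb; exact: bpow_neq1.
have b1 : b - 1 != 0 by rewrite subr_eq0 -{1}(expr1 b) bn1.
have b2 : b ^+ 2 - 1 != 0 by rewrite subr_eq0 bn1.
have b3 : b ^+ 3 - 1 != 0 by rewrite subr_eq0 bn1.
have [g20 g21 g22] := gb2 b b1 b2.
have [g31 g32 g33] := gb3 b b1 b2 b3.
split.
  rewrite /Qeig /= -hb.
  rewrite (_ : (d - (d - 2) = 2)%N); last by lia.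
  rewrite (_ : minn j 2 = 2); last by lia.
  rewrite unlock /=.
  rewrite g20 g21 g22 !ht; ring.
rewrite /Qeig /= -hb.
rewrite (_ : (d - (d - 3) = 3)%N); last by lia.
have g30 : gbinom b 3 0 = 1 by rewrite /gbinom big_geq.
case: (j =P 2) => [j2|jn2].
  have t30 : t 3%N = 0.
    have hg := @gstep b (d - 3) (d - 2) (d - j) (ltac:(lia)) (ltac:(lia)).
    have e0 : (d - 2 - (d - j) = 0)%N by lia.
    rewrite e0 expr0 subrr mulr0 in hg.
    have nz : b ^+ (d - 2) - 1 != 0 by rewrite subr_eq0 bn1 //; lia.
    have g3 : gbinom b (d - 3) (d - j) = 0.
      by move/eqP: hg; rewrite mulf_eq0 (negbTE nz) orbF => /eqP.
    by rewrite ht g3 mulr0.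
  rewrite (_ : minn j 3 = 2); last by lia.
  rewrite unlock /= t30.
  rewrite g30 g31 g32 !ht; ring.
rewrite (_ : minn j 3 = 3); last by lia.
rewrite unlock /=.
rewrite g30 g31 g32 g33 !ht; ring.
Qed.


Lemma powE (b : rat) m n : m = n -> b ^+ m = b ^+ n.
Proof. by move=> ->. Qed.

Theorem lemma5p8 (q d j : nat) :
  prime_power q -> (2 <= q)%N -> (6 <= d)%N -> (2 <= j)%N -> (j <= d)%N ->
  `|Qeig q d j (d - 3)| > `|Qeig q d j (d - 2)|.
Proof.
move=> _ hq hd hj hjd.
set b : rat := - (q%:R).
set L := (d - j)%N.
pose t := fun h : nat => b ^+ ('C(j - h, 2) + h * d) * gbinom b (d - h) L.
have [H2 H3] := @main_part q d j b t hq hd hj hjd erefl (fun h => erefl).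
have hQ : 2 <= (q%:R : rat) by rewrite ler_nat.
have bn1 : forall k, (0 < k)%N -> b ^+ k != 1 by move=> k hk; exact: bpow_neq1.
have bn0 : b != 0 by rewrite oppr_eq0; apply/eqP => h; rewrite h in hQ; lra.
set Z := b ^+ (d - 2).
set Y := b ^+ (j - 2).
set P := b ^+ 'C(j - 2, 2).
have Z0 : Z != 0 by rewrite expf_neq0.
have Y0 : Y != 0 by rewrite expf_neq0.
have P0 : P != 0 by rewrite expf_neq0.
have pd : b ^+ d = b ^+ 2 * Z by rewrite -exprD; apply: powE; clear -hd hj hjd; lia.
have pd1 : b ^+ (d - 1) = b * Z by rewrite -exprS; apply: powE; clear -hd hj hjd; lia.
have pj : b ^+ j = b ^+ 2 * Y by rewrite -exprD; apply: powE; clear -hd hj hjd; lia.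
have pj1 : b ^+ (j - 1) = b * Y by rewrite -exprS; apply: powE; clear -hd hj hjd; lia.
have nZ1 : Z - 1 != 0 by rewrite subr_eq0 bn1 //; clear -hd hj hjd; lia.
have nbZ1 : b * Z - 1 != 0 by rewrite -pd1 subr_eq0 bn1 //; clear -hd hj hjd; lia.
have nb2Z1 : b ^+ 2 * Z - 1 != 0 by rewrite -pd subr_eq0 bn1 //; clear -hd hj hjd; lia.
have nbY1 : b * Y - 1 != 0 by rewrite -pj1 subr_eq0 bn1 //; clear -hd hj hjd; lia.
have nb2Y1 : b ^+ 2 * Y - 1 != 0 by rewrite -pj subr_eq0 bn1 //; clear -hd hj hjd; lia.
set g0 := gbinom b d L.
set g1 := gbinom b (d - 1) L.
set g2 := gbinom b (d - 2) L.
set g3 := gbinom b (d - 3) L.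
have R1 : g1 * (b ^+ 2 * Z - 1) = g0 * (b ^+ 2 * Y - 1).
  have h := @gstep b (d - 1) d L (ltac:((clear -hd hj hjd; lia))) (ltac:(rewrite /L; clear -hd hj hjd; lia)).
  have e : (d - L = j)%N by rewrite /L; clear -hd hj hjd; lia.
  rewrite e in h.
  rewrite -pd -pj; exact h.
have R2 : g2 * (b * Z - 1) = g1 * (b * Y - 1).
  have h := @gstep b (d - 2) (d - 1) L (ltac:((clear -hd hj hjd; lia))) (ltac:(rewrite /L; clear -hd hj hjd; lia)).
  have e : (d - 1 - L = j - 1)%N by rewrite /L; clear -hd hj hjd; lia.
  rewrite e in h.
  rewrite -pd1 -pj1; exact h.
have R3 : g3 * (Z - 1) = g2 * (Y - 1).
  have h := @gstep b (d - 3) (d - 2) L (ltac:((clear -hd hj hjd; lia))) (ltac:(rewrite /L; clear -hd hj hjd; lia)).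
  have e : (d - 2 - L = j - 2)%N by rewrite /L; clear -hd hj hjd; lia.
  rewrite e in h.
  rewrite /g3 /g2 /Z /Y; exact h.
have g2n : g2 != 0 by apply: gbinom_neq0 => //; rewrite /L; clear -hd hj hjd; lia.
have G1 : g1 = g2 * (b * Z - 1) / (b * Y - 1) by rewrite R2 mulfK.
have G0 : g0 = g1 * (b ^+ 2 * Z - 1) / (b ^+ 2 * Y - 1) by rewrite R1 mulfK.
have G3 : g3 = g2 * (Y - 1) / (Z - 1) by rewrite -R3 mulfK.
have c1 : 'C(j - 1, 2) = ('C(j - 2, 2) + (j - 2))%N.
  by rewrite (_ : (j - 1 = (j - 2).+1)%N) ?binS2 //; clear -hd hj hjd; lia.
have c0 : 'C(j, 2) = ('C(j - 2, 2) + (j - 2) * 2 + 1)%N.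
  rewrite {1}(_ : (j = (j - 2).+2)%N) ?binS2; last by clear -hd hj hjd; lia.
  clear -hd hj hjd; lia.
have T0 : t 0%N = P * b * Y ^+ 2 * g0.
  rewrite /t !subn0 mul0n addn0 -/g0 c0 !exprD exprM expr1 /P /Y; ring.
have T1 : t 1%N = P * Y * (b ^+ 2 * Z) * g1.
  rewrite /t mul1n -/g1 c1 !exprD pd /P /Y; ring.
have T2 : t 2%N = P * (b ^+ 2 * Z) ^+ 2 * g2.
  rewrite /t -/g2 (mulnC 2%N d) exprD exprM pd /P; ring.
have T3 : t 3%N * Y = P * (b ^+ 2 * Z) ^+ 3 * b * g3.
  case: (j =P 2) => [j2|jn2].
    rewrite /t -/g3.
    have -> : g3 = 0 by rewrite G3 /Y j2 subnn expr0 subrr mulr0 mul0r.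
    by rewrite ?mulr0 ?mul0r.
  have c3 : 'C(j - 2, 2) = ('C(j - 3, 2) + (j - 3))%N.
    by rewrite (_ : (j - 2 = (j - 3).+1)%N) ?binS2 //; clear -hd hj hjd jn2; lia.
  rewrite /t -/g3 /P /Y c3 (_ : (j - 2 = (j - 3).+1)%N); last by clear -hd hj hjd jn2; lia.
  rewrite (exprS b (j - 3)) (mulnC 3%N d) !exprD exprM pd; ring.
have t5 : ((2 : rat) ^+ 5)^-1 = 1/32 by rewrite mul1r.
have t6 : ((2 : rat) ^+ 6)^-1 = 1/64 by rewrite mul1r.
have t4 : ((2 : rat) ^+ 4)^-1 = 1/16 by rewrite mul1r.
have t2c : ((2 : rat) ^+ 2)^-1 = 1/4 by rewrite mul1r.
set e := (b * Z)^-1.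
set f := (b ^+ 2 * Z)^-1.
set gg := Z^-1.
set be := (b * Y)^-1.
set up := (b ^+ 2 * Y)^-1.
set om := Y^-1.
have he : `|e| <= 1/32.
  have h := @inv_abs (q%:R) 5 (d - 1) hQ (ltac:(clear -hd hj hjd; lia)).
  rewrite -/b pd1 t5 in h; exact h.
have hf : `|f| <= 1/64.
  have h := @inv_abs (q%:R) 6 d hQ (ltac:(clear -hd hj hjd; lia)).
  rewrite -/b pd t6 in h; exact h.
have hg : `|gg| <= 1/16.
  have h := @inv_abs (q%:R) 4 (d - 2) hQ (ltac:(clear -hd hj hjd; lia)).
  rewrite -/b -/Z t4 in h; exact h.
have hbe : be <= 1/4.
  have h := @inv_le4 (q%:R) (j - 1) hQ (ltac:(clear -hd hj hjd; lia)).
  rewrite -/b pj1 in h; exact h.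
have hup : `|up| <= 1/4.
  have h := @inv_abs (q%:R) 2 j hQ (ltac:(clear -hd hj hjd; lia)).
  rewrite -/b pj t2c in h; exact h.
have hom : om = 1 \/ om <= 1/4.
  case: (j =P 2) => [j2|jn2].
    left; rewrite /om /Y j2 subnn expr0 invr1; reflexivity.
  right; have h := @inv_le4 (q%:R) (j - 2) hQ (ltac:(clear -hd hj hjd jn2; lia)).
  rewrite -/b -/Y in h; exact h.
set E := (1 - e) / (b ^+ 2 * (1 - be)).
set F := (1 - e) * (1 - f) / (b ^+ 3 * (1 - be) * (1 - up)).
set W := b ^+ 3 * (1 - om) / (1 - gg).
have hkey := @key (q%:R) e f gg be up om b E F W hQ he hf hg hbe hup hom erefl erefl erefl erefl.
clearbody b Z Y P.
have HT1 : t 1%N = t 2%N * E.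
  rewrite T1 T2 G1 /E /e /be; field.
  by rewrite ?Y0 ?bn0 ?nbY1 ?nb2Y1 ?Z0 ?nZ1.
have HT0 : t 0%N = t 2%N * F.
  rewrite T0 T2 G0 G1 /F /e /be /f /up; field.
  by rewrite ?Y0 ?bn0 ?nbY1 ?nb2Y1 ?Z0 ?nZ1.
have HT3 : t 3%N = t 2%N * W.
  apply: (mulIf Y0); rewrite T3 T2 G3 /W /om /gg; field.
  by rewrite ?Y0 ?bn0 ?nbY1 ?nb2Y1 ?Z0 ?nZ1.
have t2n : t 2%N != 0 by rewrite T2 !mulf_neq0 // expf_neq0 // mulf_neq0 // expf_neq0.
rewrite H2 H3 HT0 HT1 HT3.
have -> : (-1) ^+ j * (t 2%N * F + t 2%N * E * (1 + b) + t 2%N) =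
   ((-1) ^+ j * t 2%N) * (1 + (1 + b) * E + F) by ring.
have -> : (-1) ^+ j * (t 2%N * F + t 2%N * E * (1 + b + b ^+ 2) + t 2%N * (1 + b + b ^+ 2) + t 2%N * W) =
   ((-1) ^+ j * t 2%N) * (F + (1 + b + b ^+ 2) * E + (1 + b + b ^+ 2) + W) by ring.
rewrite !normrM ltr_pM2l; first exact: hkey.
rewrite -!normrM normr_gt0 mulf_neq0 ?signr_eq0 //; exact: t2n.
Qed.
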